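(* Let $T\in\mathcal M_n$, and let $f,g:[0,\infty)\to[0,\infty)$ be continuous with $f(t)g(t)=t$ for all $t\ge0$. Then \[\|T\|\le\frac12\left(\Big\|\frac{f^2(|T|)+g^2(|T^*|)}{2}+\mathfrak RT\Big\|+\Big\|\frac{f^2(|T|)+g^2(|T^*|)}{2}-\mathfrak RT\Big\|\right).\] In particular, $\|T\|\le\frac14\big(\||T|+|T^*|+2\mathfrak RT\|+\||T|+|T^*|-2\mathfrak RT\|\big)$.
   Context: $\mathcal M_n$ denotes the algebra of $n\times n$ complex matrices; $\|\cdot\|$ is the operator (spectral) norm. $|X|=(X^*X)^{1/2}$; functions of positive semidefinite matrices are defined by functional calculus. $\mathfrak RT=\frac{T+T^*}{2}$. *)

(* Defs.v *)
From HB Require Import structures.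
From mathcomp Require Import all_boot all_order all_algebra.
From mathcomp Require Import complex spectral.
From mathcomp Require Import all_classical all_reals all_analysis.

Set Implicit Arguments.
Unset Strict Implicit.
Unset Printing Implicit Defensive.

Import Order.TTheory GRing.Theory Num.Theory.
Local Open Scope ring_scope.
Local Open Scope classical_set_scope.

Definition adj (R : realType) (n : nat) (T : 'M[R[i]]_n) : 'M[R[i]]_n :=
  (map_mx Num.conj T)^T.

Definition realpart (R : realType) (n : nat) (T : 'M[R[i]]_n) : 'M[R[i]]_n :=
  (2%:R)^-1 *: (T + adj T).

(* Functional calculus of a (normal, here always Hermitian PSD) matrix A via
   the library spectral decomposition A = P^-1 diag(d) P (P unitary):
   f(A) = P^-1 diag(f(d)) P. For Hermitian A the entries of d are real. *)
Definition fcalc (R : realType) (n : nat) (f : R -> R) (A : 'M[R[i]]_n)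
  : 'M[R[i]]_n :=
  invmx (spectralmx A)
  *m diag_mx (map_mx (fun z : R[i] => ((f (complex.Re z))%:C)%C) (spectral_diag A))
  *m spectralmx A.

Definition absm (R : realType) (n : nat) (X : 'M[R[i]]_n) : 'M[R[i]]_n :=
  fcalc (@Num.sqrt R) (adj X *m X).

Definition vnorm (R : realType) (n : nat) (x : 'cV[R[i]]_n) : R :=
  Num.sqrt (\sum_(k < n) ((complex.Re (x k 0)) ^+ 2 + (complex.Im (x k 0)) ^+ 2)).

Definition opnorm (R : realType) (n : nat) (A : 'M[R[i]]_n) : R :=
  sup [set vnorm (A *m x) | x in [set x : 'cV[R[i]]_n | vnorm x = 1]].

(* Main.v *)
Require Import Defs.
From HB Require Import structures.
From mathcomp Require Import all_boot all_order all_algebra.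
From mathcomp Require Import complex spectral sesquilinear.
From mathcomp Require Import all_classical all_reals all_analysis.
Import Order.TTheory GRing.Theory Num.Theory numFieldNormedType.Exports.
Set Implicit Arguments.
Unset Strict Implicit.
Unset Printing Implicit Defensive.
Local Open Scope ring_scope.
Local Open Scope classical_set_scope.

Definition ip (R : realType) n (x y : 'cV[R[i]]_n) : R[i] :=
  \sum_k x k 0 * Num.conj (y k 0).

Definition ns (R : realType) n (x : 'cV[R[i]]_n) : R :=
  \sum_(k < n) ((complex.Re (x k 0)) ^+ 2 + (complex.Im (x k 0)) ^+ 2).

Lemma conjRC (R : realType) (r : R) : Num.conj (r%:C)%C = (r%:C)%C.
Proof. by apply/eqP; rewrite eq_complex /= oppr0 !eqxx. Qed.

Lemma ip_ns (R : realType) n (x : 'cV[R[i]]_n) : ip x x = ((ns x)%:C)%C.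
Proof.
rewrite /ip /ns rmorph_sum; apply: eq_bigr => k _.
by rewrite -normCK -add_Re2_Im2.
Qed.

Lemma vnorm_ns (R : realType) n (x : 'cV[R[i]]_n) : vnorm x = Num.sqrt (ns x).
Proof. by []. Qed.

Lemma ns_ge0 (R : realType) n (x : 'cV[R[i]]_n) : 0 <= ns x.
Proof. by apply: sumr_ge0 => k _; rewrite addr_ge0 ?sqr_ge0. Qed.

Lemma ip_ge0 (R : realType) n (x : 'cV[R[i]]_n) : 0 <= ip x x.
Proof. by rewrite ip_ns lecR ns_ge0. Qed.

Lemma ipDl (R : realType) n (x1 x2 y : 'cV[R[i]]_n) :
  ip (x1 + x2) y = ip x1 y + ip x2 y.
Proof. by rewrite /ip -big_split; apply: eq_bigr => k _; rewrite mxE mulrDl. Qed.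

Lemma ipDr (R : realType) n (x y1 y2 : 'cV[R[i]]_n) :
  ip x (y1 + y2) = ip x y1 + ip x y2.
Proof. by rewrite /ip -big_split; apply: eq_bigr => k _; rewrite mxE rmorphD mulrDr. Qed.

Lemma ipZl (R : realType) n (c : R[i]) (x y : 'cV[R[i]]_n) :
  ip (c *: x) y = c * ip x y.
Proof. by rewrite /ip mulr_sumr; apply: eq_bigr => k _; rewrite mxE mulrA. Qed.

Lemma ipZr (R : realType) n (c : R[i]) (x y : 'cV[R[i]]_n) :
  ip x (c *: y) = Num.conj c * ip x y.
Proof.
rewrite /ip mulr_sumr; apply: eq_bigr => k _.
by rewrite mxE rmorphM mulrCA.
Qed.

Lemma ipNl (R : realType) n (x y : 'cV[R[i]]_n) : ip (- x) y = - ip x y.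
Proof. by rewrite -scaleN1r ipZl mulN1r. Qed.

Lemma ipNr (R : realType) n (x y : 'cV[R[i]]_n) : ip x (- y) = - ip x y.
Proof. by rewrite -scaleN1r ipZr rmorphN1 mulN1r. Qed.

Lemma ipC (R : realType) n (x y : 'cV[R[i]]_n) : ip y x = Num.conj (ip x y).
Proof.
rewrite /ip rmorph_sum; apply: eq_bigr => k _.
by rewrite rmorphM /= conjCK mulrC.
Qed.

Lemma ip_adj (R : realType) n (A : 'M[R[i]]_n) (x y : 'cV[R[i]]_n) :
  ip (A *m x) y = ip x (adj A *m y).
Proof.
rewrite /ip /adj.
under eq_bigr do rewrite mxE big_distrl /=.
rewrite exchange_big /=; apply: eq_bigr => j _.
rewrite mxE rmorph_sum mulr_sumr; apply: eq_bigr => i _.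
by rewrite !mxE rmorphM /= conjCK mulrCA mulrA.
Qed.

Lemma ip_dot (R : realType) n (x y : 'cV[R[i]]_n) : ip x y = dotmx x^T y^T.
Proof.
rewrite dotmxE mxE /ip; apply: eq_bigr => k _.
by rewrite !mxE.
Qed.

Lemma CS (R : realType) n (x y : 'cV[R[i]]_n) :
  `|ip x y| ^+ 2 <= ip x x * ip y y.
Proof. by rewrite !ip_dot; exact: (CauchySchwarz (@dotmx _ n) x^T y^T).1. Qed.

Lemma RC_inj (R : realType) (a b : R) : (a%:C)%C = (b%:C)%C -> a = b.
Proof. by case. Qed.

Lemma ip_bound (R : realType) n (N : 'M[R[i]]_n) :
  exists K : R, 0 <= K /\ forall x, ns (N *m x) <= K * ns x.
Proof.
pose r i : 'cV[R[i]]_n := \col_j Num.conj (N i j).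
exists (\sum_i ns (r i)); split; first by apply: sumr_ge0 => i _; exact: ns_ge0.
move=> x; rewrite -lecR rmorphM /= -!ip_ns rmorph_sum /=.
have -> : ip (N *m x) (N *m x) = \sum_i `|ip x (r i)| ^+ 2.
  rewrite /ip; apply: eq_bigr => i _; rewrite normCK; congr (_ * Num.conj _).
  - rewrite mxE; apply: eq_bigr => j _; by rewrite !mxE conjCK mulrC.
  - rewrite mxE; apply: eq_bigr => j _; by rewrite !mxE conjCK mulrC.
rewrite mulr_suml; apply: ler_sum => i _; rewrite -ip_ns mulrC; exact: CS.
Qed.

Lemma ns_scale (R : realType) n (r : R) (x : 'cV[R[i]]_n) :
  ns ((r%:C)%C *: x) = r ^+ 2 * ns x.
Proof.
apply: RC_inj; rewrite -ip_ns ipZl ipZr conjRC ip_ns.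
by rewrite rmorphM rmorphXn /= expr2 mulrA.
Qed.

Lemma vnorm_ge0 (R : realType) n (x : 'cV[R[i]]_n) : 0 <= vnorm x.
Proof. exact: sqrtr_ge0. Qed.

Lemma vnorm_scale (R : realType) n (r : R) (x : 'cV[R[i]]_n) :
  vnorm ((r%:C)%C *: x) = `|r| * vnorm x.
Proof. by rewrite !vnorm_ns ns_scale sqrtrM ?sqr_ge0 // sqrtr_sqr. Qed.

Definition unitset (R : realType) n (N : 'M[R[i]]_n) :=
  [set vnorm (N *m x) | x in [set x : 'cV[R[i]]_n | vnorm x = 1]].

Lemma unitset_ub (R : realType) n (N : 'M[R[i]]_n) : has_ubound (unitset N).
Proof.
have [K [K0 HK]] := ip_bound N.
exists (Num.sqrt K) => _ [x /= x1 <-].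
rewrite vnorm_ns ler_sqrt //; have := HK x.
have -> : ns x = 1 by rewrite -(sqr_sqrtr (ns_ge0 x)) -vnorm_ns x1 expr1n.
by rewrite mulr1.
Qed.

Lemma opnorm_ge0 (R : realType) n (N : 'M[R[i]]_n) : 0 <= opnorm N.
Proof.
rewrite /opnorm -/(unitset N).
have [/eqP->|/set0P [y Sy]] := boolP (unitset N == set0); first by rewrite sup0.
apply: le_trans (ub_le_sup (unitset_ub N) Sy).
by case: Sy => x _ <-; exact: vnorm_ge0.
Qed.

Lemma opnorm_bound (R : realType) n (N : 'M[R[i]]_n) (x : 'cV[R[i]]_n) :
  vnorm (N *m x) <= opnorm N * vnorm x.
Proof.
have [K [K0 HK]] := ip_bound N.
have [s0|] := eqVneq (ns x) 0.
  rewrite !vnorm_ns s0 sqrtr0 mulr0.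
  have := HK x; rewrite s0 mulr0 => h.
  by rewrite (@le_anti _ _ (ns (N *m x)) 0) ?sqrtr0 // h ns_ge0.
move=> sn0; set s := vnorm x.
have s_gt0 : 0 < s by rewrite sqrtr_gt0 lt_def sn0 ns_ge0.
pose y := ((s^-1)%:C)%C *: x.
have y1 : vnorm y = 1 by rewrite vnorm_scale ger0_norm ?invr_ge0 ?ltW // mulVf // gt_eqF.
have := ub_le_sup (unitset_ub N) (ex_intro2 _ _ y y1 erefl).
have si0 : 0 <= s^-1 by rewrite invr_ge0 ltW.
rewrite -/(opnorm N) /y -scalemxAr vnorm_scale (ger0_norm si0).
by rewrite ler_pdivrMl // mulrC.
Qed.

Lemma opnorm_le (R : realType) n (N : 'M[R[i]]_n) (c : R) :
  0 <= c -> (forall x, vnorm x = 1 -> vnorm (N *m x) <= c) -> opnorm N <= c.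
Proof.
move=> c0 H; rewrite /opnorm -/(unitset N).
have [/eqP->|ne] := boolP (unitset N == set0); first by rewrite sup0.
apply: ge_sup; first exact/set0P.
by move=> _ [x /= x1 <-]; exact: H.
Qed.

Lemma ReD (R : realType) (a b : R[i]) : complex.Re (a + b) = complex.Re a + complex.Re b.
Proof. by case: a; case: b. Qed.

Lemma ReRC (R : realType) (r : R) (z : R[i]) : complex.Re ((r%:C)%C * z) = r * complex.Re z.
Proof. by case: z => a b /=; rewrite mul0r subr0. Qed.

Lemma ge0_RC (R : realType) (a : R[i]) : 0 <= a -> a = ((complex.Re a)%:C)%C /\ 0 <= complex.Re a.
Proof.
case: a => x y; rewrite [0 <= _]/Order.le /=. 
by move=> /andP[/eqP-> ->].
Qed.
From mathcomp Require Import ring lra.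

Definition Fc (R : realType) n (T A B : 'M[R[i]]_n) (w1 w2 : 'cV[R[i]]_n) :=
  ip (A *m w1) w1 + ip (B *m w2) w2 + (ip (T *m w1) w2 + ip (T *m w1) w2).

Lemma Fc_ident (R : realType) n (T A B : 'M[R[i]]_n) (s t : R) (u v : 'cV[R[i]]_n) :
  (s%:C)%C * ((s%:C)%C + (t%:C)%C) * Fc T A B u u
  + (t%:C)%C * ((s%:C)%C + (t%:C)%C) * Fc T A B v (- v)
  - (s%:C)%C * (t%:C)%C * Fc T A B (u + v) (u - v)
  = Fc T A B ((s%:C)%C *: u - (t%:C)%C *: v) ((s%:C)%C *: u + (t%:C)%C *: v).
Proof.
rewrite /Fc !(mulmxDr, mulmxN) -!scalemxAr.
move: (A *m u) (A *m v) (B *m u) (B *m v) (T *m u) (T *m v) => Au Av Bu Bv Tu Tv.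
rewrite !ipDl !ipDr !ipNl !ipNr !ipZl !ipZr !conjRC.
ring.
Qed.

Lemma real_ineq (R : realType) (a b X Y : R) :
  0 <= a -> 0 <= b -> X ^+ 2 + Y ^+ 2 <= a * b -> 0 <= a + b + (X + X).
Proof.
move=> a0 b0 h; case: (lerP 0 (a + b + (X + X))) => // H.
have h1 : 0 < - (X + X) - (a + b) by lra.
have h2 : 0 <= - (X + X) + (a + b) by lra.
have := mulr_gt0 h1 (ltr_pwDr (mulr_gt0 h1 h1) h2) => h3.
have := sqr_ge0 (a - b); have := sqr_ge0 Y; nra.
Qed.

Lemma Fc_ge0 (R : realType) n (T A B : 'M[R[i]]_n) :
  (forall w, 0 <= ip (A *m w) w) -> (forall w, 0 <= ip (B *m w) w) ->
  (forall w1 w2, `|ip (T *m w1) w2| ^+ 2 <= ip (A *m w1) w1 * ip (B *m w2) w2) ->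
  forall w1 w2, 0 <= complex.Re (Fc T A B w1 w2).
Proof.
move=> hA hB hM w1 w2; rewrite /Fc !ReD.
have [ea a0] := ge0_RC (hA w1); have [eb b0] := ge0_RC (hB w2).
have := hM w1 w2; rewrite ea eb -add_Re2_Im2 -rmorphM lecR.
exact: real_ineq.
Qed.

Lemma ReN (R : realType) (a : R[i]) : complex.Re (- a) = - complex.Re a.
Proof. by case: a. Qed.

Lemma half_half (R : realType) : ((2:R)^-1)%:C%C + ((2:R)^-1)%:C%C = 1.
Proof. by rewrite -rmorphD /=; congr (_%:C)%C; lra. Qed.

Lemma arith (R : realType) (al be e P Q F r a b : R) :
  0 <= al -> 0 <= be -> 0 < e -> 0 <= a -> 0 <= b -> a + b = 1 ->
  P <= 2 * al * a -> Q <= 2 * be * b -> 0 <= F ->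
  0 <= (be + e) * ((be + e) + (al + e)) * P + (al + e) * ((be + e) + (al + e)) * Q
       - (be + e) * (al + e) * (F + (r + r + (r + r))) ->
  r <= (al + be) / 2 + e.
Proof.
move=> al0 be0 e0 a0 b0 nuv k1 k2 F1.
set s := be + e; set t := al + e => H1.
have s0 : 0 < s by rewrite /s; lra.
have t0 : 0 < t by rewrite /t; lra.
have st0 : 0 < s + t by lra.
have k1' : s * (s + t) * P <= s * (s + t) * (2 * al * a).
  by apply: ler_wpM2l; [exact: mulr_ge0 (ltW s0) (ltW st0)|].
have k2' : t * (s + t) * Q <= t * (s + t) * (2 * be * b).
  by apply: ler_wpM2l; [exact: mulr_ge0 (ltW t0) (ltW st0)|].
have k3 : s * (s + t) * (2 * al * a) + t * (s + t) * (2 * be * b)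
          <= s * t * (2 * (s + t)).
  have -> : s * t * (2 * (s + t)) = s * t * (2 * (s + t)) * (a + b) by rewrite nuv mulr1.
  rewrite -subr_ge0.
  have -> : s * t * (2 * (s + t)) * (a + b) -
    (s * (s + t) * (2 * al * a) + t * (s + t) * (2 * be * b))
    = 2 * (s + t) * e * (s * a + t * b) by rewrite /s /t; ring.
  by rewrite !mulr_ge0 ?addr_ge0 ?mulr_ge0 // ltW.
have k4 : s * t * (r + r + (r + r)) <= s * t * (2 * (s + t)).
  have : s * t * (F + (r + r + (r + r))) <= s * t * (2 * (s + t)) by lra.
  move=> k; apply: le_trans k; apply: ler_wpM2l; [exact: mulr_ge0 (ltW s0) (ltW t0)| lra].
rewrite ler_pM2l ?mulr_gt0 // in k4.
rewrite /s /t in k4; lra.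
Qed.

Lemma core2 (R : realType) n (T A B : 'M[R[i]]_n) (al be : R) :
  (forall w, 0 <= ip (A *m w) w) -> (forall w, 0 <= ip (B *m w) w) ->
  (forall w1 w2, `|ip (T *m w1) w2| ^+ 2 <= ip (A *m w1) w1 * ip (B *m w2) w2) ->
  (forall u, complex.Re (Fc T A B u u) <= 2 * al * ns u) ->
  (forall v, complex.Re (Fc T A B v (- v)) <= 2 * be * ns v) ->
  0 <= al -> 0 <= be ->
  forall x y, ns x = 1 -> ns y = 1 ->
  complex.Re (ip (T *m x) y) <= (al + be) / 2.
Proof.
move=> hA hB hM hal hbe al0 be0 x y nx ny.
apply/ler_addgt0Pr => e e0.
set s := be + e; set t := al + e.
pose h : R[i] := ((2:R)^-1)%:C%C.
pose u := h *: (x + y); pose v := h *: (x - y).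
have eu : u + v = x.
  apply/matrixP => i j; rewrite !mxE -[RHS]mul1r -half_half; ring.
have ev : u - v = y.
  apply/matrixP => i j; rewrite !mxE -[RHS]mul1r -half_half; ring.
have nuv : ns u + ns v = 1.
  apply: RC_inj; rewrite rmorphD /= -!ip_ns /u /v.
  rewrite !(ipDl, ipDr, ipNl, ipNr, ipZl, ipZr) /h conjRC !ip_ns nx ny.
  change ((1:R)%:C)%C with (1:R[i]).
  transitivity ((((2:R)^-1)%:C%C + ((2:R)^-1)%:C%C) ^+ 2 * 1); first ring.
  by rewrite half_half expr1n mul1r.
have Hid := Fc_ident T A B s t u v.
rewrite eu ev in Hid.
have H1 : 0 <= s * (s + t) * complex.Re (Fc T A B u u)
         + t * (s + t) * complex.Re (Fc T A B v (- v))
         - s * t * complex.Re (Fc T A B x y).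
  have := Fc_ge0 hA hB hM ((s%:C)%C *: u - (t%:C)%C *: v) ((s%:C)%C *: u + (t%:C)%C *: v).
  by rewrite -Hid -!rmorphD -!rmorphM {1}ReD {1}ReN {1}ReD !ReRC.
have H2 : Fc T A B x y = Fc T A B x (- y) + (ip (T *m x) y + ip (T *m x) y
              + (ip (T *m x) y + ip (T *m x) y)).
  rewrite /Fc !(mulmxN, ipNl, ipNr); ring.
have F1 := Fc_ge0 hA hB hM x (- y).
have k1 := hal u; have k2 := hbe v.
move: H1 k1 k2 F1; rewrite H2.
set Fu := Fc T A B u u; set Fv := Fc T A B v (- v); set Fx := Fc T A B x (- y).
set z := ip (T *m x) y.
clearbody Fu Fv Fx z.
rewrite ReD !ReD.
set r := complex.Re z.
set P := complex.Re Fu; set Q := complex.Re Fv.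
set F := complex.Re Fx.
move=> H1 k1 k2 F1.
exact: (arith al0 be0 e0 (ns_ge0 u) (ns_ge0 v) nuv k1 k2 F1 H1).
Qed.

Lemma ns_vnorm (R : realType) n (x : 'cV[R[i]]_n) : ns x = vnorm x ^+ 2.
Proof. by rewrite vnorm_ns (sqr_sqrtr (ns_ge0 x)). Qed.

Lemma core (R : realType) n (T A B : 'M[R[i]]_n) (al be : R) :
  (forall w, 0 <= ip (A *m w) w) -> (forall w, 0 <= ip (B *m w) w) ->
  (forall w1 w2, `|ip (T *m w1) w2| ^+ 2 <= ip (A *m w1) w1 * ip (B *m w2) w2) ->
  (forall u, complex.Re (Fc T A B u u) <= 2 * al * ns u) ->
  (forall v, complex.Re (Fc T A B v (- v)) <= 2 * be * ns v) ->
  0 <= al -> 0 <= be ->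
  opnorm T <= (al + be) / 2.
Proof.
move=> hA hB hM hal hbe al0 be0.
have c0 : 0 <= (al + be) / 2 by rewrite divr_ge0 ?addr_ge0.
apply: opnorm_le => // x x1.
have nx : ns x = 1 by rewrite ns_vnorm x1 expr1n.
have H := core2 hA hB hM hal hbe al0 be0 nx.
set Tx := T *m x in H *.
set s := vnorm Tx.
have [s0|sn0] := eqVneq s 0; first by rewrite s0.
have s_gt0 : 0 < s by rewrite lt_def sn0 vnorm_ge0.
pose y := ((s^-1)%:C)%C *: Tx.
have ny : ns y = 1.
  by rewrite ns_scale ns_vnorm -/s -exprMn mulVf // expr1n.
have := H y ny.
rewrite /y ipZr conjRC ip_ns -rmorphM ns_vnorm -/s.
by rewrite /= expr2 mulKf.
Qed.

Local Open Scope sesquilinear_scope.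

Lemma adjE (R : realType) n (A : 'M[R[i]]_n) : adj A = A ^t*.
Proof. by apply/matrixP => i j; rewrite !mxE. Qed.

Lemma adjK (R : realType) n (A : 'M[R[i]]_n) : adj (adj A) = A.
Proof. by rewrite !adjE trmxCK. Qed.

Lemma adjM (R : realType) n (A B : 'M[R[i]]_n) : adj (A *m B) = adj B *m adj A.
Proof.
apply/matrixP => i j; rewrite !mxE rmorph_sum; apply: eq_bigr => k _.
by rewrite !mxE rmorphM mulrC.
Qed.

Lemma adjD (R : realType) n (A B : 'M[R[i]]_n) : adj (A + B) = adj A + adj B.
Proof. by apply/matrixP => i j; rewrite !mxE rmorphD. Qed.

Lemma adj_diag (R : realType) n (v : 'rV[R[i]]_n) :
  adj (diag_mx v) = diag_mx (map_mx Num.conj v).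
Proof.
apply/matrixP => i j; rewrite !mxE eq_sym.
by case: eqP => [->|_]; rewrite ?mulr1n ?mulr0n ?conjC0.
Qed.

Lemma unit_adjr (R : realType) n (P : 'M[R[i]]_n) : P \is unitarymx -> P *m adj P = 1%:M.
Proof. by move=> /unitarymxP; rewrite adjE. Qed.

Lemma unit_adjl (R : realType) n (P : 'M[R[i]]_n) : P \is unitarymx -> adj P *m P = 1%:M.
Proof.
move=> uP; rewrite adjE -invmx_unitary //; apply: mulVmx.
exact: unitarymx_unit.
Qed.

Lemma fc_unique (R : realType) n (P1 P2 : 'M[R[i]]_n) (c1 c2 : 'rV[R[i]]_n)
  (h : R[i] -> R[i]) :
  P1 \is unitarymx -> P2 \is unitarymx ->
  adj P1 *m diag_mx c1 *m P1 = adj P2 *m diag_mx c2 *m P2 ->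
  adj P1 *m diag_mx (map_mx h c1) *m P1 = adj P2 *m diag_mx (map_mx h c2) *m P2.
Proof.
move=> u1 u2 E.
pose Q := P2 *m adj P1.
have QD : Q *m diag_mx c1 = diag_mx c2 *m Q.
  have := congr1 (fun X => P2 *m X *m adj P1) E.
  rewrite !mulmxA unit_adjr // mul1mx -!mulmxA unit_adjr // mulmx1.
  by rewrite !mulmxA.
have QP1 : Q *m P1 = P2 by rewrite /Q -mulmxA unit_adjl // mulmx1.
have P2Q : adj P2 *m Q = adj P1 by rewrite /Q mulmxA unit_adjl // mul1mx.
clearbody Q.
have QDh : Q *m diag_mx (map_mx h c1) = diag_mx (map_mx h c2) *m Q.
  apply/matrixP => i j; move/matrixP: QD => /(_ i j).
  rewrite !mul_mx_diag !mul_diag_mx !mxE => e.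
  have [q0|qn0] := eqVneq (Q i j) 0; first by rewrite q0 mulr0 mul0r.
  have -> : c1 0 j = c2 0 i by apply: (mulfI qn0); rewrite e mulrC.
  by rewrite mulrC.
rewrite -{2}QP1 !mulmxA -(mulmxA _ _ Q) -QDh mulmxA P2Q.
by [].
Qed.

Lemma spectral_eq (R : realType) n (X : 'M[R[i]]_n) :
  X \is normalmx -> X = adj (spectralmx X) *m diag_mx (spectral_diag X) *m spectralmx X.
Proof.
move=> /orthomx_spectralP E.
have U := spectral_unitarymx X.
rewrite adjE -(invmx_unitary U).
exact: E.
Qed.

Lemma fcalc_eq (R : realType) n (f : R -> R) (X P : 'M[R[i]]_n) (c : 'rV[R[i]]_n) :
  P \is unitarymx -> X = adj P *m diag_mx c *m P ->
  fcalc f X = adj P *m diag_mx (map_mx (fun z : R[i] => ((f (complex.Re z))%:C)%C) c) *m P.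
Proof.
move=> uP EX.
have nX : X \is normalmx.
  apply/orthomx_spectral_subproof; exists (P, c); first exact: uP.
  rewrite /= (invmx_unitary uP) -adjE; exact: EX.
have U := spectral_unitarymx X.
rewrite /fcalc (invmx_unitary U) -adjE.
apply: (fc_unique _ U uP).
by rewrite -(spectral_eq nX).
Qed.

Lemma ip_diag (R : realType) n (v : 'rV[R[i]]_n) (x y : 'cV[R[i]]_n) :
  ip (diag_mx v *m x) y = \sum_k v 0 k * (x k 0 * Num.conj (y k 0)).
Proof. by rewrite /ip; apply: eq_bigr => k _; rewrite mul_diag_mx mxE mulrA. Qed.

Lemma ipxx (R : realType) n (x : 'cV[R[i]]_n) :
  ip x x = \sum_k `|x k 0| ^+ 2.
Proof. by rewrite /ip; apply: eq_bigr => k _; rewrite normCK. Qed.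

Lemma gram_diag (R : realType) n (S : 'M[R[i]]_n) (d : 'rV[R[i]]_n) :
  adj S *m S = diag_mx d -> forall k, d 0 k = \sum_i `|S i k| ^+ 2.
Proof.
move=> E k; move/matrixP: E => /(_ k k); rewrite !mxE eqxx mulr1n => <-.
by apply: eq_bigr => i _; rewrite !mxE normCK mulrC.
Qed.

Lemma gram_diag' (R : realType) n (S : 'M[R[i]]_n) (e : 'rV[R[i]]_n) :
  S *m adj S = diag_mx e -> forall i, e 0 i = \sum_k `|S i k| ^+ 2.
Proof.
move=> E i; move/matrixP: E => /(_ i i); rewrite !mxE eqxx mulr1n => <-.
by apply: eq_bigr => k _; rewrite !mxE normCK.
Qed.

Lemma sum_sq_ge (R : realType) n (F : 'I_n -> R[i]) (j : 'I_n) :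
  `|F j| ^+ 2 <= \sum_k `|F k| ^+ 2.
Proof.
rewrite (bigD1 j) //= lerDl; apply: sumr_ge0 => k _.
by rewrite exprn_ge0.
Qed.

Lemma entry_claim (R : realType) n (S : 'M[R[i]]_n) (d e : 'rV[R[i]]_n)
  (phi psi : R -> R) :
  adj S *m S = diag_mx d -> S *m adj S = diag_mx e ->
  (forall t, 0 <= t -> 0 <= phi t) -> (forall t, 0 <= t -> 0 <= psi t) ->
  (forall t, 0 <= t -> phi t * psi t = t) ->
  forall i j, S i j =
    ((Num.sqrt (psi (complex.Re (e 0 i))))%:C)%C *
    (S i j * (if 0 < complex.Re (d 0 j) then (((Num.sqrt (complex.Re (d 0 j)))^-1)%:C)%C else 0))
    * ((Num.sqrt (phi (complex.Re (d 0 j))))%:C)%C.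
Proof.
move=> Ed Ee phi0 psi0 phipsi i j.
have [s0|sn0] := eqVneq (S i j) 0; first by rewrite s0 mul0r mulr0 mul0r.
have comm : S *m diag_mx d = diag_mx e *m S.
  by rewrite -Ed -Ee mulmxA.
have dej : d 0 j = e 0 i.
  move/matrixP: comm => /(_ i j); rewrite mul_mx_diag mul_diag_mx !mxE => h.
  by apply: (mulfI sn0); rewrite h mulrC.
have dpos : 0 < d 0 j.
  rewrite (gram_diag Ed j); apply: lt_le_trans (sum_sq_ge (fun k => S k j) i).
  by rewrite exprn_gt0 // normr_gt0.
have [dR _] := ge0_RC (ltW dpos).
set t := complex.Re (d 0 j) in dR *.
have t0 : 0 < t by rewrite -ltcR -dR.
rewrite -dej -/t t0.
transitivity (S i j * ((Num.sqrt (phi t) * Num.sqrt (psi t) * (Num.sqrt t)^-1)%:C)%C);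
  last by rewrite !rmorphM /=; ring.
have -> : Num.sqrt (phi t) * Num.sqrt (psi t) * (Num.sqrt t)^-1 = 1.
  rewrite -sqrtrM ?phi0 ?ltW // phipsi ?ltW // mulfV //.
  by rewrite gt_eqF // sqrtr_gt0.
by rewrite mulr1.
Qed.

Lemma ipSS (R : realType) n (S : 'M[R[i]]_n) (d : 'rV[R[i]]_n) (w : 'cV[R[i]]_n) :
  adj S *m S = diag_mx d ->
  ip (S *m w) (S *m w) = \sum_k d 0 k * (w k 0 * Num.conj (w k 0)).
Proof.
move=> Ed; rewrite ip_adj mulmxA Ed ipC ip_diag rmorph_sum; apply: eq_bigr => k _.
have dk0 : 0 <= d 0 k by rewrite (gram_diag Ed k) sumr_ge0 // => i _; rewrite exprn_ge0.
by rewrite !rmorphM /= conjCK (geC0_conj dk0) [_ * Num.conj _]mulrC.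
Qed.

Lemma CL (R : realType) n (S : 'M[R[i]]_n) (d e : 'rV[R[i]]_n)
  (phi psi : R -> R) :
  adj S *m S = diag_mx d -> S *m adj S = diag_mx e ->
  (forall t, 0 <= t -> 0 <= phi t) -> (forall t, 0 <= t -> 0 <= psi t) ->
  (forall t, 0 <= t -> phi t * psi t = t) ->
  forall x y, `|ip (S *m x) y| ^+ 2 <=
      ip (diag_mx (map_mx (fun z : R[i] => ((phi (complex.Re z))%:C)%C) d) *m x) x *
      ip (diag_mx (map_mx (fun z : R[i] => ((psi (complex.Re z))%:C)%C) e) *m y) y.
Proof.
move=> Ed Ee phi0 psi0 phipsi x y.
have ecl := entry_claim Ed Ee phi0 psi0 phipsi.
pose a := \row_j ((Num.sqrt (phi (complex.Re (d 0 j))))%:C)%C : 'rV[R[i]]_n.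
pose b := \row_i ((Num.sqrt (psi (complex.Re (e 0 i))))%:C)%C : 'rV[R[i]]_n.
pose r := \row_j (if 0 < complex.Re (d 0 j) then (((Num.sqrt (complex.Re (d 0 j)))^-1)%:C)%C else 0) : 'rV[R[i]]_n.
have SE : S = diag_mx b *m (S *m diag_mx r) *m diag_mx a.
  apply/matrixP => i j; rewrite mul_mx_diag mul_diag_mx mul_mx_diag !mxE.
  exact: ecl.
have dge0 : forall k, 0 <= d 0 k.
  by move=> k; rewrite (gram_diag Ed k) sumr_ge0 // => i _; rewrite exprn_ge0.
have ege0 : forall k, 0 <= e 0 k.
  by move=> k; rewrite (gram_diag' Ee k) sumr_ge0 // => i _; rewrite exprn_ge0.
set x' := diag_mx a *m x; set y' := diag_mx b *m y.
have adjb : adj (diag_mx b) = diag_mx b.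
  by rewrite adj_diag; congr diag_mx; apply/matrixP => i j; rewrite !mxE conjRC.
have E1 : ip (S *m x) y = ip ((S *m diag_mx r) *m x') y'.
  by rewrite {1}SE -!mulmxA ip_adj adjb.
have E2 : ip x' x' = ip (diag_mx (map_mx (fun z : R[i] => ((phi (complex.Re z))%:C)%C) d) *m x) x.
  rewrite ip_diag /ip; apply: eq_bigr => k _.
  rewrite /x' mul_diag_mx !mxE rmorphM /= conjRC mulrACA -rmorphM /=.
  have [_ rk0] := ge0_RC (dge0 k).
  by rewrite -expr2 sqr_sqrtr // phi0.
have E3 : ip y' y' = ip (diag_mx (map_mx (fun z : R[i] => ((psi (complex.Re z))%:C)%C) e) *m y) y.
  rewrite ip_diag /ip; apply: eq_bigr => k _.
  rewrite /y' mul_diag_mx !mxE rmorphM /= conjRC mulrACA -rmorphM /=.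
  have [_ rk0] := ge0_RC (ege0 k).
  by rewrite -expr2 sqr_sqrtr // psi0.
have E4 : forall z, ip ((S *m diag_mx r) *m z) ((S *m diag_mx r) *m z) <= ip z z.
  move=> z; rewrite -mulmxA (ipSS _ Ed) /ip; apply: ler_sum => k _.
  rewrite mul_diag_mx !mxE rmorphM /= mulrACA mulrA.
  have [dk rk0] := ge0_RC (dge0 k).
  have xx0 : 0 <= z k 0 * Num.conj (z k 0) by rewrite -normCK exprn_ge0.
  case: ifP => [t0|_]; last by rewrite !mul0r mulr0.
  rewrite conjRC dk -!rmorphM /= !mulrA -rmorphM /=.
  have -> : complex.Re (d 0 k) * ((Num.sqrt (complex.Re (d 0 k)))^-1 /
     Num.sqrt (complex.Re (d 0 k))) = 1.
    rewrite -invfM -expr2 sqr_sqrtr ?ltW // mulfV //.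
    by rewrite gt_eqF.
  by rewrite mul1r.
rewrite E1 -E2 -E3.
apply: le_trans (CS _ _) _.
apply: ler_wpM2r; first exact: ip_ge0.
exact: E4.
Qed.

Local Open Scope sesquilinear_scope.

Lemma herm_normal (R : realType) n (X : 'M[R[i]]_n) : adj X = X -> X \is normalmx.
Proof. by move=> h; apply/normalmxP; rewrite -adjE h. Qed.

Lemma ip_diag_ge0 (R : realType) n (v : 'rV[R[i]]_n) (x : 'cV[R[i]]_n) :
  (forall k, 0 <= v 0 k) -> 0 <= ip (diag_mx v *m x) x.
Proof.
move=> hv; rewrite ip_diag; apply: sumr_ge0 => k _.
by rewrite mulr_ge0 // -normCK exprn_ge0.
Qed.

Lemma uLK (R : realType) n (P X : 'M[R[i]]_n) : P \is unitarymx -> adj P *m (P *m X) = X.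
Proof. by move=> u; rewrite mulmxA unit_adjl // mul1mx. Qed.
Lemma uRK (R : realType) n (P X : 'M[R[i]]_n) : P \is unitarymx -> P *m (adj P *m X) = X.
Proof. by move=> u; rewrite mulmxA unit_adjr // mul1mx. Qed.

Lemma MS_gen (R : realType) n (T A B : 'M[R[i]]_n) (phi psi : R -> R) :
  (forall t, 0 <= t -> 0 <= phi t) -> (forall t, 0 <= t -> 0 <= psi t) ->
  (forall t, 0 <= t -> phi t * psi t = t) ->
  A = adj (spectralmx (adj T *m T)) *m
      diag_mx (map_mx (fun z : R[i] => ((phi (complex.Re z))%:C)%C) (spectral_diag (adj T *m T)))
      *m spectralmx (adj T *m T) ->
  B = adj (spectralmx (T *m adj T)) *m
      diag_mx (map_mx (fun z : R[i] => ((psi (complex.Re z))%:C)%C) (spectral_diag (T *m adj T)))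
      *m spectralmx (T *m adj T) ->
  [/\ forall w, 0 <= ip (A *m w) w, forall w, 0 <= ip (B *m w) w &
      forall w1 w2, `|ip (T *m w1) w2| ^+ 2 <= ip (A *m w1) w1 * ip (B *m w2) w2].
Proof.
move=> phi0 psi0 phipsi EA EB.
set P := spectralmx (adj T *m T); set d := spectral_diag (adj T *m T).
set Q := spectralmx (T *m adj T); set e := spectral_diag (T *m adj T).
have uP : P \is unitarymx := spectral_unitarymx _.
have uQ : Q \is unitarymx := spectral_unitarymx _.
have ETT : adj T *m T = adj P *m diag_mx d *m P.
  by apply: spectral_eq; apply: herm_normal; rewrite adjM adjK.
have ETT' : T *m adj T = adj Q *m diag_mx e *m Q.
  by apply: spectral_eq; apply: herm_normal; rewrite adjM adjK.
pose S := Q *m T *m adj P.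
have Ed : adj S *m S = diag_mx d.
  rewrite /S !adjM adjK -!mulmxA (uLK _ uQ) (mulmxA (adj T)) ETT -!mulmxA (uRK _ uP).
  by rewrite (unit_adjr uP) mulmx1.
have Ee : S *m adj S = diag_mx e.
  rewrite /S !adjM adjK -!mulmxA (mulmxA (adj P)) (unit_adjl uP) mul1mx.
  rewrite (mulmxA T) ETT' -!mulmxA (uRK _ uQ).
  by rewrite (unit_adjr uQ) mulmx1.
have ET : T = adj Q *m S *m P.
  by rewrite /S -!mulmxA (uLK _ uQ) (unit_adjl uP) mulmx1.
have dge0 : forall k, 0 <= d 0 k.
  by move=> k; rewrite (gram_diag Ed k) sumr_ge0 // => i _; rewrite exprn_ge0.
have ege0 : forall k, 0 <= e 0 k.
  by move=> k; rewrite (gram_diag' Ee k) sumr_ge0 // => i _; rewrite exprn_ge0.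
have ipA : forall w, ip (A *m w) w =
   ip (diag_mx (map_mx (fun z : R[i] => ((phi (complex.Re z))%:C)%C) d) *m (P *m w)) (P *m w).
  by move=> w; rewrite EA -!mulmxA ip_adj adjK.
have ipB : forall w, ip (B *m w) w =
   ip (diag_mx (map_mx (fun z : R[i] => ((psi (complex.Re z))%:C)%C) e) *m (Q *m w)) (Q *m w).
  by move=> w; rewrite EB -!mulmxA ip_adj adjK.
split.
- move=> w; rewrite ipA; apply: ip_diag_ge0 => k; rewrite mxE lecR phi0 //.
  by have [_ ->] := ge0_RC (dge0 k).
- move=> w; rewrite ipB; apply: ip_diag_ge0 => k; rewrite mxE lecR psi0 //.
  by have [_ ->] := ge0_RC (ege0 k).
move=> w1 w2; rewrite ipA ipB.
have -> : ip (T *m w1) w2 = ip (S *m (P *m w1)) (Q *m w2).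
  by rewrite {1}ET -!mulmxA ip_adj adjK.
exact: CL.
Qed.

Lemma Re_conj (R : realType) (z : R[i]) : complex.Re (Num.conj z) = complex.Re z.
Proof. by case: z. Qed.

Lemma real_sqle (R : realType) (X Y a b c : R) :
  X ^+ 2 + Y ^+ 2 <= a * b -> 0 <= b -> 0 <= c -> a <= c ^+ 2 * b -> X <= c * b.
Proof.
move=> h b0 c0 hab.
have h2 : X ^+ 2 <= (c * b) ^+ 2.
  apply: le_trans (_ : X ^+ 2 + Y ^+ 2 <= _); first by rewrite lerDl sqr_ge0.
  apply: le_trans h _; rewrite exprMn expr2 mulrA.
  by apply: ler_wpM2r.
have cb0 : 0 <= c * b by rewrite mulr_ge0.
case: (lerP X (c * b)) => // hx.
move: h2; rewrite !expr2 => h2.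
have hx' : 0 < X - c * b by rewrite subr_gt0.
have : 0 < (X - c * b) * (X + c * b) by rewrite mulr_gt0 //; lra.
nra.
Qed.

Lemma quad_bound (R : realType) n (N : 'M[R[i]]_n) (u : 'cV[R[i]]_n) :
  complex.Re (ip (N *m u) u) <= opnorm N * ns u.
Proof.
have h1 := CS (N *m u) u.
rewrite (ip_ns (N *m u)) (ip_ns u) -rmorphM -add_Re2_Im2 lecR in h1.
apply: real_sqle h1 (ns_ge0 u) (opnorm_ge0 N) _.
rewrite !ns_vnorm -exprMn; apply: lerXn2r; rewrite ?nnegrE ?vnorm_ge0 //.
  by rewrite mulr_ge0 ?opnorm_ge0 ?vnorm_ge0.
exact: opnorm_bound.
Qed.

Lemma two_half (R : realType) : (2%:R : R[i]) * (2%:R)^-1 = 1.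
Proof. by rewrite mulfV // pnatr_eq0. Qed.

Lemma FcP (R : realType) n (T A B : 'M[R[i]]_n) (u : 'cV[R[i]]_n) :
  complex.Re (Fc T A B u u) =
  complex.Re (ip (((2%:R)^-1 *: (A + B) + realpart T) *m u) u) *+ 2.
Proof.
rewrite /realpart /Fc !mulmxDl -!scalemxAl !mulmxDl !ipDl !ipZl !ipDl.
rewrite [ip (adj T *m u) u]ip_adj adjK (ipC (T *m u) u).
move: (ip (A *m u) u) (ip (B *m u) u) (ip (T *m u) u) => a b t.
rewrite mulr2n -ReD.
have -> : (2%:R^-1 * (a + b) + 2%:R^-1 * (t + Num.conj t)) +
     (2%:R^-1 * (a + b) + 2%:R^-1 * (t + Num.conj t))
   = (2%:R * 2%:R^-1) * (a + b + (t + Num.conj t)) :> R[i].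
  by ring.
by rewrite two_half mul1r !ReD Re_conj.
Qed.

Lemma FcN (R : realType) n (T A B : 'M[R[i]]_n) (u : 'cV[R[i]]_n) :
  complex.Re (Fc T A B u (- u)) =
  complex.Re (ip (((2%:R)^-1 *: (A + B) - realpart T) *m u) u) *+ 2.
Proof.
rewrite /realpart /Fc mulmxBl -!scalemxAl !mulmxDl !mulmxN !ipDl !ipNl !ipNr !ipZl !ipDl opprK.
rewrite [ip (adj T *m u) u]ip_adj adjK (ipC (T *m u) u).
move: (ip (A *m u) u) (ip (B *m u) u) (ip (T *m u) u) => a b t.
rewrite mulr2n -ReD.
have -> : (2%:R^-1 * (a + b) - 2%:R^-1 * (t + Num.conj t)) +
     (2%:R^-1 * (a + b) - 2%:R^-1 * (t + Num.conj t))
   = (2%:R * 2%:R^-1) * (a + b - (t + Num.conj t)) :> R[i].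
  by ring.
by rewrite two_half mul1r !ReD !ReN ReD Re_conj opprD.
Qed.

Lemma FcP2 (R : realType) n (T A B : 'M[R[i]]_n) (u : 'cV[R[i]]_n) :
  complex.Re (Fc T A B u u) =
  complex.Re (ip ((A + B + 2%:R *: realpart T) *m u) u).
Proof.
rewrite /realpart /Fc !mulmxDl -!scalemxAl !mulmxDl !ipDl !ipZl !ipDl.
rewrite [ip (adj T *m u) u]ip_adj adjK (ipC (T *m u) u).
move: (ip (A *m u) u) (ip (B *m u) u) (ip (T *m u) u) => a b t.
rewrite mulrA two_half mul1r !ReD Re_conj.
by [].
Qed.

Lemma FcN2 (R : realType) n (T A B : 'M[R[i]]_n) (u : 'cV[R[i]]_n) :
  complex.Re (Fc T A B u (- u)) =
  complex.Re (ip ((A + B - 2%:R *: realpart T) *m u) u).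
Proof.
rewrite /realpart /Fc mulmxBl -!scalemxAl !mulmxDl !mulmxN !ipDl !ipNl !ipNr !ipZl !ipDl opprK.
rewrite [ip (adj T *m u) u]ip_adj adjK (ipC (T *m u) u).
move: (ip (A *m u) u) (ip (B *m u) u) (ip (T *m u) u) => a b t.
by rewrite mulrA two_half mul1r !ReD !ReN ReD Re_conj opprD.
Qed.

Local Close Scope sesquilinear_scope.

Lemma absm_eq (R : realType) n (T : 'M[R[i]]_n) :
  absm T = adj (spectralmx (adj T *m T)) *m
      diag_mx (map_mx (fun z : R[i] => ((Num.sqrt (complex.Re z))%:C)%C) (spectral_diag (adj T *m T)))
      *m spectralmx (adj T *m T).
Proof.
rewrite /absm /fcalc (invmx_unitary (spectral_unitarymx _)) -adjE //.
Qed.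

Lemma ETT_eq (R : realType) n (T : 'M[R[i]]_n) :
  adj T *m T = adj (spectralmx (adj T *m T)) *m diag_mx (spectral_diag (adj T *m T))
    *m spectralmx (adj T *m T).
Proof. by apply: spectral_eq; apply: herm_normal; rewrite adjM adjK. Qed.

Lemma fabsm_eq (R : realType) n (T : 'M[R[i]]_n) (f : R -> R) :
  fcalc (fun t => f t ^+ 2) (absm T) = adj (spectralmx (adj T *m T)) *m
      diag_mx (map_mx (fun z : R[i] => (((f (Num.sqrt (complex.Re z))) ^+ 2)%:C)%C)
        (spectral_diag (adj T *m T)))
      *m spectralmx (adj T *m T).
Proof.
rewrite (fcalc_eq _ (spectral_unitarymx _) (absm_eq T)).
congr (_ *m diag_mx _ *m _); apply/matrixP => i j; rewrite !mxE.
by [].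
Qed.

Theorem corollary3p7 (R : realType) (n : nat) (T : 'M[R[i]]_n) (f g : R -> R)
  (fcont : {within [set t : R | 0 <= t], continuous f})
  (gcont : {within [set t : R | 0 <= t], continuous g})
  (f_ge0 : forall t : R, 0 <= t -> 0 <= f t)
  (g_ge0 : forall t : R, 0 <= t -> 0 <= g t)
  (fg : forall t : R, 0 <= t -> f t * g t = t) :
  let M := (2%:R)^-1 *: (fcalc (fun t => f t ^+ 2) (absm T)
                         + fcalc (fun t => g t ^+ 2) (absm (adj T))) in
  opnorm T <= (2%:R)^-1 * (opnorm (M + realpart T) + opnorm (M - realpart T))
  /\
  opnorm T <= (4%:R)^-1 * (opnorm (absm T + absm (adj T) + 2%:R *: realpart T)
                           + opnorm (absm T + absm (adj T) - 2%:R *: realpart T)).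
Proof.
move=> M; split.
- pose phi t := f (Num.sqrt t) ^+ 2; pose psi t := g (Num.sqrt t) ^+ 2.
  have phi0 : forall t, 0 <= t -> 0 <= phi t by move=> t _; exact: sqr_ge0.
  have psi0 : forall t, 0 <= t -> 0 <= psi t by move=> t _; exact: sqr_ge0.
  have phipsi : forall t, 0 <= t -> phi t * psi t = t.
    move=> t t0; rewrite /phi /psi -exprMn fg ?sqrtr_ge0 //.
    by rewrite sqr_sqrtr.
  have EA := fabsm_eq T f.
  have EB := fabsm_eq (adj T) g; rewrite adjK in EB.
  have [hA hB hM] := MS_gen phi0 psi0 phipsi EA EB.
  rewrite mulrC.
  apply: core hA hB hM _ _ (opnorm_ge0 _) (opnorm_ge0 _).
  + move=> u; rewrite FcP -/M -mulrA mulr_natl !mulr2n.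
    by apply: lerD; apply: quad_bound.
  + move=> v; rewrite FcN -/M -mulrA mulr_natl !mulr2n.
    by apply: lerD; apply: quad_bound.
- have phi0 : forall t : R, 0 <= t -> 0 <= Num.sqrt t by move=> t _; exact: sqrtr_ge0.
  have phipsi : forall t : R, 0 <= t -> Num.sqrt t * Num.sqrt t = t.
    by move=> t t0; rewrite -expr2 sqr_sqrtr.
  have EA := absm_eq T.
  have EB := absm_eq (adj T); rewrite adjK in EB.
  have [hA hB hM] := MS_gen phi0 phi0 phipsi EA EB.
  set o1 := opnorm (absm T + absm (adj T) + 2%:R *: realpart T).
  set o2 := opnorm (absm T + absm (adj T) - 2%:R *: realpart T).
  have o10 : 0 <= o1 / 2 by rewrite divr_ge0 ?opnorm_ge0.
  have o20 : 0 <= o2 / 2 by rewrite divr_ge0 ?opnorm_ge0.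
  have h2 : forall o : R, 2 * (o / 2) = o by move=> o; rewrite mulrC divfK // pnatr_eq0.
  have hal : forall u, complex.Re (Fc T (absm T) (absm (adj T)) u u) <= 2 * (o1 / 2) * ns u.
    by move=> u; rewrite FcP2 h2; apply: quad_bound.
  have hbe : forall v, complex.Re (Fc T (absm T) (absm (adj T)) v (- v)) <= 2 * (o2 / 2) * ns v.
    by move=> v; rewrite FcN2 h2; apply: quad_bound.
  have h := core hA hB hM hal hbe o10 o20.
  apply: (le_trans h); lra.
Qed.
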